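(* Let $f\in\mathcal S_{\mathbf M}$ and let $\|\cdot\|$ be either the Luxemburg norm $\|\cdot\|_{\mathbf M}$ or the Orlicz norm $\|\cdot\|^*_{\mathbf M}$ (the same choice for $E_n$ and $\omega_\alpha$). Then for any $\tau>0$, $n\in\mathbb N$ and $\alpha>0$, $$E_n(f)\le 2C_{n,\alpha}(\tau)\,\omega_\alpha\Big(f,\frac{\tau}{n}\Big),$$ where $C_{n,\alpha}(\tau):=\inf_{v\in V(\tau)}\frac{v(\tau)-v(0)}{\inf_{k\in\mathbb N,k\ge n}\int_0^\tau\varphi(ku/n)\,dv(u)}$ with $\varphi(t)=2^\alpha|\sin(t/2)|^\alpha$.
   Context: $L$ is the space of $2\pi$-periodic Lebesgue integrable functions, with Fourier coefficients $\widehat f(k)=(2\pi)^{-1}\int_0^{2\pi}f(x)e^{-\mathrm{i}kx}\,dx$. Let $\mathbf M=\{M_k\}_{k\in\mathbb Z}$ be a sequence of Orlicz functions on $[0,\infty)$ (nondecreasing, convex, $M_k(0)=0$, $M_k(u)\to\infty$ as $u\to\infty$). For a complex sequence $c=\{c_k\}_{k\in\mathbb Z}$: Luxemburg norm $\|c\|_{\mathbf M}=\inf\{a>0:\sum_kM_k(|c_k|/a)\le1\}$; with $\tilde M_k(v)=\sup\{uv-M_k(u):u\ge0\}$ and $\Lambda$ the set of positive sequences $\lambda$ with $\sum_k\tilde M_k(\lambda_k)\le1$, Orlicz norm $\|c\|^*_{\mathbf M}=\sup\{\sum_k\lambda_k|c_k|:\lambda\in\Lambda\}$. $\mathcal S_{\mathbf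 M}$ is the space of $f\in L$ with $\|\{\widehat f(k)\}\|_{\mathbf M}<\infty$, and the norms of $f$ are those of $\{\widehat f(k)\}$. $E_n(f)=\inf\{\|f-t\|:t\in\mathcal T_{n-1}\}$, $\mathcal T_{n-1}$ the trigonometric polynomials $\sum_{|k|\le n-1}c_ke^{\mathrm{i}kx}$. For $\alpha>0$, $\Delta_h^\alpha f(x)=\sum_{j\ge0}(-1)^j\binom{\alpha}{j}f(x-jh)$, whose Fourier coefficients are $(1-e^{-\mathrm{i}kh})^\alpha\widehat f(k)$ (so of modulus $2^\alpha|\sin(kh/2)|^\alpha|\widehat f(k)|$), and $\omega_\alpha(f,\delta)=\sup_{|h|\le\delta}\|\Delta_h^\alpha f\|$. $V(\tau)$ is the set of bounded nondecreasing functions on $[0,\tau]$ that are not constant there; integrals are Lebesgue–Stieltjes. *)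

(* Defs.v *)
From HB Require Import structures.
From mathcomp Require Import all_boot all_order all_algebra.
From mathcomp Require Import all_classical all_reals all_analysis.
From mathcomp Require Import complex.
Set Implicit Arguments. Unset Strict Implicit. Unset Printing Implicit Defensive.
Import Order.TTheory GRing.Theory Num.Theory.
Import numFieldNormedType.Exports.
Local Open Scope classical_set_scope.
Local Open Scope ring_scope.

Section Defs.
Context {R : realType}.

Definition orlicz_fun (M : R -> R) : Prop :=
  [/\ M 0 = 0,
      (forall u w, 0 <= u -> u <= w -> M u <= M w),
      (forall u w t, 0 <= u -> 0 <= w -> 0 <= t <= 1 ->
         M (t * u + (1 - t) * w) <= t * M u + (1 - t) * M w)
    & M x @[x --> +oo] --> +oo].

Definition conj_fun (M : R -> R) (v : R) : \bar R :=
  ereal_sup [set (u * v - M u)%:E | u in [set u : R | 0 <= u]].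

Definition lux_norm (M : int -> R -> R) (c : int -> R[i]) : \bar R :=
  ereal_inf [set a%:E | a in [set a : R | 0 < a /\
     (\esum_(k in [set: int]) (M k (Normc.normc (c k) / a))%:E <= 1)%E]].

Definition orl_norm (M : int -> R -> R) (c : int -> R[i]) : \bar R :=
  ereal_sup [set (\esum_(k in [set: int]) (lam k * Normc.normc (c k))%:E)%E |
     lam in [set lam : int -> R | (forall k, 0 < lam k) /\
       (\esum_(k in [set: int]) conj_fun (M k) (lam k) <= 1)%E]].

Inductive normkind := Luxemburg | Orlicz.

Definition seqnorm (nk : normkind) M c :=
  match nk with Luxemburg => lux_norm M c | Orlicz => orl_norm M c end.

Definition fcoef (f : R -> R[i]) (k : int) : R[i] :=
  Complex ((\int[lebesgue_measure]_(x in `[0, 2 * pi]) (complex.Re (f x) * cos (k%:~R * x) + complex.Im (f x) * sin (k%:~R * x))) / (2 * pi))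
  ((\int[lebesgue_measure]_(x in `[0, 2 * pi]) (complex.Im (f x) * cos (k%:~R * x) - complex.Re (f x) * sin (k%:~R * x))) / (2 * pi)).

Definition in_L (f : R -> R[i]) : Prop :=
  [/\ (forall x, f (x + 2 * pi) = f x),
      lebesgue_measure.-integrable `[0, 2 * pi] (EFin \o (fun x => complex.Re (f x)))
    & lebesgue_measure.-integrable `[0, 2 * pi] (EFin \o (fun x => complex.Im (f x)))].

Definition in_SM (M : int -> R -> R) (f : R -> R[i]) : Prop :=
  in_L f /\ (lux_norm M (fcoef f) < +oo)%E.

Definition trig_coefs (n : nat) : set (int -> R[i]) :=
  [set c | forall k : int, (n%:Z <= `|k|)%R -> c k = 0].

Definition En nk M (f : R -> R[i]) (n : nat) : \bar R :=
  ereal_inf [set seqnorm nk M (fun k => fcoef f k - c k) | c in trig_coefs n].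

Definition diff_coef (alpha h : R) (f : R -> R[i]) (k : int) : R[i] :=
  Complex ((2 `^ alpha * `|sin (k%:~R * h / 2)| `^ alpha) * Normc.normc (fcoef f k)) 0.

Definition omega nk M (alpha : R) f (delta : R) : \bar R :=
  ereal_sup [set seqnorm nk M (diff_coef alpha h f) | h in [set h : R | `|h| <= delta]].

Definition phi (alpha t : R) : R := 2 `^ alpha * `|sin (t / 2)| `^ alpha.

Definition inV (tau : R) (v : R -> R) : Prop :=
  [/\ (exists B : R, forall u, 0 <= u <= tau -> `|v u| <= B),
      (forall u w, 0 <= u -> u <= w -> w <= tau -> v u <= v w)
    & (exists u w, [/\ 0 <= u <= tau, 0 <= w <= tau & v u != v w])].

Definition ls_cumulative (tau : R) (v : R -> R) (F : R -> R) : Prop :=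
  [/\ (forall u, u < 0 -> F u = v 0),
      (forall u, tau <= u -> F u = v tau)
    & (forall u, 0 <= u < tau -> v x @[x --> u^'+] --> F u)].

Definition ls_int (F : cumulative R R) (tau : R) (g : R -> R) : \bar R :=
  (\int[lebesgue_stieltjes_measure F]_(u in `[0%R, tau]) (g u)%:E)%E.

Definition Cconst (alpha : R) (n : nat) (tau : R) : \bar R :=
  ereal_inf [set r | exists (v : R -> R) (F : cumulative R R),
    [/\ inV tau v, ls_cumulative tau v F &
      let J := ereal_inf [set ls_int F tau (fun u => phi alpha (k%:R * u / n%:R))
                          | k in [set k : nat | (n <= k)%N]] in
      r = if J == 0 then +oo%E else ((v tau - v 0) / fine J)%:E]].

End Defs.

(* Main.v *)
Require Import Defs.
From HB Require Import structures.
From mathcomp Require Import all_boot all_order all_algebra.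
From mathcomp Require Import all_classical all_reals all_analysis.
From mathcomp Require Import complex measurable_realfun.
From mathcomp Require Import ring lra.
Import Order.TTheory GRing.Theory Num.Theory.
Import numFieldNormedType.Exports.
Local Open Scope classical_set_scope.
Local Open Scope ring_scope.

Section S.
Context {R : realType}.

Lemma orlicz_ge0 (M : R -> R) x : orlicz_fun M -> 0 <= x -> 0 <= M x.
Proof. by case=> M0 Mnd _ _ x0; rewrite -M0; apply: Mnd. Qed.

Lemma three_chord (M : R -> R) y m x : orlicz_fun M -> 0 <= y -> y < m -> m < x ->
  (M m - M y) / (m - y) <= (M x - M m) / (x - m).
Proof.
case=> _ _ Mcv _ y0 ym mx.
have y0' : 0 <= x by lra.
pose t := (x - m) / (x - y).
have xy : 0 < x - y by lra.
have t01 : 0 <= t <= 1.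
  apply/andP; split; first by rewrite /t divr_ge0 //; lra.
  by rewrite /t ler_pdivrMr //; lra.
have := Mcv y x t y0 y0' t01.
have -> : t * y + (1 - t) * x = m.
  rewrite /t; field; lra.
have -> : 1 - t = (m - y) / (x - y) by rewrite /t; field; lra.
rewrite /t => H.
have H2 : (x - y) * M m <= (x - m) * M y + (m - y) * M x.
  move: H; rewrite (_ : (x - m) / (x - y) * M y + (m - y) / (x - y) * M x = ((x - m) * M y + (m - y) * M x) / (x - y)); last first.
    by field; lra.
  by rewrite ler_pdivlMr // mulrC.
rewrite ler_pdivrMr; last lra.
rewrite mulrAC ler_pdivlMr; last lra.
nra.
Qed.

End S.

Section S2.
Context {R : realType}.
Lemma subgrad (M : R -> R) m : orlicz_fun M -> 0 <= m ->
  exists2 s, 0 <= s & forall x, 0 <= x -> M m + s * (x - m) <= M x.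
Proof.
move=> oM m0; have [M0 Mnd _ _] := oM.
have [->|mpos] := eqVneq m 0.
  by exists 0 => // x x0; rewrite M0 mul0r addr0 -M0; apply: Mnd.
have {mpos}mpos : 0 < m by rewrite lt_def mpos m0.
pose S := [set (M m - M y) / (m - y) | y in [set y | 0 <= y < m]].
have S0 : S (M m / m).
  by exists 0; [rewrite /= lexx mpos | rewrite M0 !subr0].
have ub : forall x, m < x -> ubound S ((M x - M m) / (x - m)).
  move=> x mx _ [y /andP[y0 ym] <-]; exact: three_chord.
have hs : has_sup S.
  by split; [exists (M m / m) | exists ((M (m + 1) - M m) / (m + 1 - m)); apply: ub; lra].
exists (sup S).
  apply: le_trans (sup_upper_bound hs S0).
  by rewrite divr_ge0 ?subr_ge0 ?(ltW mpos) //; rewrite -M0; apply: Mnd; lra.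
move=> x x0.
have [xm|mx|->] := ltgtP x m; last by rewrite subrr mulr0 addr0.
- have := sup_upper_bound hs (ex_intro2 _ _ x (_ : [set y | 0 <= y < m] x) erefl).
  rewrite /= x0 xm => /(_ isT).
  rewrite ler_pdivrMr; last lra.
  nra.
- have := ge_sup (ex_intro _ _ S0) (ub x mx).
  rewrite ler_pdivlMr; last lra.
  nra.
Qed.
End S2.

Section S3.
Context {R : realType}.
Lemma phi_ge0 (a t : R) : 0 <= phi a t.
Proof. by rewrite /phi mulr_ge0 // powR_ge0. Qed.

Lemma phi_le (a t : R) : 0 <= a -> phi a t <= 2 `^ a.
Proof.
move=> a0; rewrite /phi -[X in _ <= X]mulr1 ler_wpM2l ?powR_ge0 //.
have -> : (1 : R) = 1 `^ a by rewrite powR1.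
apply: ge0_ler_powR => //; rewrite ?nnegrE //.
by rewrite ler_norml sin_geN1 sin_le1.
Qed.

Lemma phiN (a t : R) : phi a (- t) = phi a t.
Proof. by rewrite /phi mulNr sinN normrN. Qed.

Lemma normc_real (x : R) : 0 <= x -> Normc.normc (Complex x 0) = x.
Proof. by move=> x0; rewrite /= expr0n /= addr0 sqrtr_sqr ger0_norm. Qed.

Lemma orlicz_to_infty (M : R -> R) : orlicz_fun M ->
  exists2 U, 0 < U & forall x, U <= x -> 1 < M x.
Proof.
case=> _ _ _ /cvgryPgt /(_ 1) [U [Ur HU]].
exists (`|U| + 1); first by rewrite ltr_pwDr // normr_ge0.
move=> x Ux; apply: HU; apply: lt_le_trans Ux.
by rewrite (le_lt_trans (ler_norm U)) // ltrDl.
Qed.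
End S3.

Section S4.
Context {R : realType}.
Local Open Scope ereal_scope.

Lemma ls_oc (F : cumulative R R) (a b : R) : (a <= b)%R ->
  lebesgue_stieltjes_measure F `]a, b]%classic = (F b - F a)%:E.
Proof.
move=> ab.
rewrite /lebesgue_stieltjes_measure /measure_extension measurable_mu_extE/=; last exact: is_ocitv.
by rewrite wlength_itv_bnd.
Qed.

Lemma mu_le (F : cumulative R R) (v : R -> R) (tau : R) :
  ls_cumulative tau v F -> (0 <= tau)%R ->
  lebesgue_stieltjes_measure F `[0%R, tau]%classic <= (v tau - v 0)%:E.
Proof.
case=> Fl Fr _ t0.
have -> : (v tau - v 0)%R = (F tau - F (-1))%R by rewrite Fr // Fl // ltrN10.
rewrite -ls_oc; last by lra.
apply: le_measure; rewrite ?inE; try exact: measurable_itv.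
by move=> x /=; rewrite !in_itv /= => /andP[x0 ->]; rewrite andbT; lra.
Qed.
End S4.

Lemma mD (R : realType) (tau : R) : measurable (`[0%R, tau]%classic : set (measurableTypeR R)).
Proof. exact: measurable_itv. Qed.

Lemma phi_meas (R : realType) (alpha c : R) :
  measurable_fun (T := measurableTypeR R) (U := R) [set: R] (fun u => phi alpha (c * u)).
Proof.
rewrite /phi.
apply: measurable_realfun.measurable_funM; first exact: measurable_cst.
apply: (measurableT_comp (measurable_realfun.measurable_powR alpha)).
apply: continuous_measurable_fun => x.
apply: (@continuous_comp _ _ _ _ (@Num.norm R R)); last exact: norm_continuous.
apply: (@continuous_comp _ _ _ (fun u => c * u / 2) sin); last exact: continuous_sin.
by apply: continuousM; [apply: continuousM; [exact: cst_continuous|exact: (fun x => cvg_id)]|exact: cst_continuous].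
Qed.

Section S5.
Context {R : realType}.
Local Open Scope ereal_scope.

Lemma integ_bnd (mu : {measure set (measurableTypeR R) -> \bar R}) (tau : R) (f : R -> R) (B : R) :
  mu `[0%R, tau]%classic < +oo ->
  measurable_fun (T := measurableTypeR R) (U := R) [set: R] f ->
  (forall x, (`|f x| <= B)%R) ->
  mu.-integrable `[0%R, tau]%classic (EFin \o f).
Proof.
move=> mufin mf fB.
have H := (@measurable_bounded_integrable _ _ _ mu f `[0%R, tau]%classic (mD R tau) mufin).
apply: H.
  by apply: measurable_funS mf.
exists B; split; first by rewrite num_real.
move=> M BM x _ /=; apply: le_trans (fB x) _; exact: ltW.
Qed.
End S5.

Section S6.
Context {R : realType}.
Variables (mu : {measure set (measurableTypeR R) -> \bar R}) (tau alpha : R).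
Hypothesis mufin : (mu `[0%R, tau]%classic < +oo)%E.
Hypothesis a0 : 0 <= alpha.
Local Notation D := (`[0%R, tau]%classic : set (measurableTypeR R)).

Lemma integ_phi (c : R) : mu.-integrable D (EFin \o (fun u => phi alpha (c * u))).
Proof.
apply: (integ_bnd _ _ _ (2 `^ alpha)) => //; first exact: phi_meas.
by move=> x; rewrite ger0_norm ?phi_ge0 ?phi_le.
Qed.

Lemma integ_lin (I : Type) (s : seq I) (b c : I -> R) :
  mu.-integrable D (EFin \o (fun u => \sum_(k <- s) b k * phi alpha (c k * u))).
Proof.
elim: s => [|i s IH].
  apply: (integ_bnd _ _ _ 0) => //.
    by under eq_fun do rewrite big_nil; exact: measurable_cst.
  by move=> x; rewrite big_nil normr0.
have h1 := integ_phi (c i).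
have h1' := integrableZl (mD R tau) (b i) h1.
have h2 := integrableD (mD R tau) h1' IH.
apply: (eq_integrable (mD R tau) _ _ _ h2).
by move=> x _ /=; rewrite big_cons EFinD EFinM.
Qed.

Lemma RintZ (b : R) (g : R -> R) : mu.-integrable D (EFin \o g) ->
  \int[mu]_(x in D) (b * g x) = b * \int[mu]_(x in D) g x.
Proof.
move=> ig; rewrite /Rintegral.
under eq_integral do rewrite EFinM.
rewrite (integralZl (mD R tau) ig).
by rewrite fineM //; exact: (integrable_fin_num (mD R tau) ig).
Qed.

Lemma Rint_lin (I : Type) (s : seq I) (b c : I -> R) :
  \int[mu]_(u in D) (\sum_(k <- s) b k * phi alpha (c k * u)) =
  \sum_(k <- s) b k * \int[mu]_(u in D) phi alpha (c k * u).
Proof.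
elim: s => [|i s IH].
  have -> : (fun u => \sum_(k <- [::]) b k * phi alpha (c k * u)) = (fun _ => 0).
    by apply/funext => u; rewrite big_nil.
  by rewrite big_nil Rintegral_cst ?mul0r //; exact: (mD R tau).
have -> : (fun u => \sum_(k <- i :: s) b k * phi alpha (c k * u)) =
   (fun u => b i * phi alpha (c i * u) + \sum_(k <- s) b k * phi alpha (c k * u)).
  by apply/funext => u; rewrite big_cons.
rewrite big_cons RintegralD; first by rewrite RintZ ?IH //; exact: integ_phi.
- exact: (mD R tau).
- have h1' := integrableZl (mD R tau) (b i) (integ_phi (c i)).
  apply: (eq_integrable (mD R tau) _ _ _ h1').
  by move=> x _ /=; rewrite EFinM.
- exact: integ_lin.
Qed.

End S6.

Section S7.
Context {R : realType}.
Local Open Scope ereal_scope.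

Lemma esum_ge_real (g : int -> R) (X : set int) : finite_set X ->
  ((\sum_(k <- finmap.enum_fset (fset_set X)) g k)%R)%:E <= \esum_(k in [set: int]) (g k)%:E.
Proof.
move=> fX; apply: esum_ge; exists X; first by split.
by rewrite fsbig_finite // sumEFin.
Qed.

Lemma esum_le_real (g : int -> R) (x : \bar R) :
  (forall X : set int, finite_set X -> ((\sum_(k <- finmap.enum_fset (fset_set X)) g k)%R)%:E <= x) ->
  \esum_(k in [set: int]) (g k)%:E <= x.
Proof.
move=> H; apply: ge_ereal_sup => _ [X [fX _] <-].
by rewrite fsbig_finite // sumEFin; exact: H.
Qed.

Lemma esum_ge1 (g : int -> R) k : (forall j, (0 <= g j)%R) ->
  (g k)%:E <= \esum_(j in [set: int]) (g j)%:E.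
Proof.
move=> g0; apply: esum_ge; exists [set k]; first by split => //; exact: finite_set1.
by rewrite fsbig_set1.
Qed.
End S7.

Section S8.
Context {R : realType}.
Variables (M : int -> R -> R) (f : R -> R[i]) (tau alpha : R) (n : nat).
Hypotheses (HM : forall k, orlicz_fun (M k)) (tau0 : 0 < tau) (n0 : (0 < n)%N) (al0 : 0 < alpha).
Variables (v : R -> R) (F : cumulative R R).
Hypothesis HF : ls_cumulative tau v F.

Local Notation D := (`[0%R, tau]%classic : set (measurableTypeR R)).
Local Notation mu := (lebesgue_stieltjes_measure F).

Definition trunc k := if (n%:Z <= `|k|)%R then 0 else fcoef f k.
Definition Ak k := Normc.normc (fcoef f k).
Definition ck (k : int) : R := k%:~R / n%:R.
Definition G k := \int[mu]_(u in D) phi alpha (ck k * u).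
Definition JJ := ereal_inf [set ls_int F tau (fun u => phi alpha (k%:R * u / n%:R))
                          | k in [set k : nat | (n <= k)%N]].
Definition mu0 := fine (mu D).
Definition VV := v tau - v 0.

Lemma Ak_ge0 k : 0 <= Ak k.
Proof. by rewrite /Ak; case: (fcoef f k) => a b /=; exact: sqrtr_ge0. Qed.

Lemma phi_abs (x y : R) : phi alpha (`|x| * y) = phi alpha (x * y).
Proof.
have [x0|x0] := leP 0 x; first by rewrite ger0_norm.
by rewrite ltr0_norm // mulNr phiN.
Qed.

Lemma bphi u k : Normc.normc (diff_coef alpha (u / n%:R) f k) = phi alpha (ck k * u) * Ak k.
Proof.
rewrite /diff_coef normc_real; last by rewrite mulr_ge0 ?Ak_ge0 // -/(phi _ _) phi_ge0.
have -> : k%:~R * (u / n%:R) = k%:~R / n%:R * u :> R by rewrite mulrA mulrAC.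
by [].
Qed.

Lemma tail_norm k : Normc.normc (fcoef f k - trunc k) = if (n%:Z <= `|k|)%R then Ak k else 0.
Proof.
rewrite /trunc; case: ifP => _; first by rewrite subr0.
by rewrite subrr /= expr0n /= addr0 sqrtr0.
Qed.

Lemma mufin : (mu D < +oo)%E.
Proof.
apply: le_lt_trans (mu_le _ _ _ HF (ltW tau0)) _; exact: ltey.
Qed.

Lemma muD : mu D = (mu0)%:E.
Proof.
rewrite /mu0 fineK // ge0_fin_numE ?mufin //; exact: measure_ge0.
Qed.

Lemma mu0_le : mu0 <= VV.
Proof. by rewrite -lee_fin -muD; exact: mu_le _ _ _ HF (ltW tau0). Qed.

Lemma mu0_ge0 : 0 <= mu0.
Proof. by rewrite -lee_fin -muD; exact: measure_ge0. Qed.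

Lemma G_ge0 k : 0 <= G k.
Proof. by apply: Rintegral_ge0 => x _; exact: phi_ge0. Qed.

Lemma G_le k : G k <= 2 `^ alpha * mu0.
Proof.
rewrite /G /mu0 -Rintegral_cst; last exact: mD.
apply: le_Rintegral; first exact: mD.
- exact: integ_phi _ _ _ mufin (ltW al0) _.
- apply: (integ_bnd _ _ _ (2 `^ alpha)) mufin _ _; first exact: measurable_cst.
  by move=> x; rewrite ger0_norm // powR_ge0.
- by move=> x _; exact: phi_le (ltW al0).
Qed.

Lemma ls_int_G (k : int) :
  ls_int F tau (fun u => phi alpha ((`|k|%N)%:R * u / n%:R)) = (G k)%:E.
Proof.
rewrite /G /Rintegral fineK; last exact: (integrable_fin_num (mD R tau) (integ_phi _ _ _ mufin (ltW al0) _)).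
apply: eq_integral => u _; congr EFin.
rewrite natr_absz intr_norm -mulrA phi_abs /ck.
by congr (phi alpha _); rewrite mulrAC mulrA.
Qed.

Lemma JJ_le_G (k : int) : (n%:Z <= `|k|)%R -> (JJ <= (G k)%:E)%E.
Proof.
move=> nk; rewrite -ls_int_G; apply: ereal_inf_lbound; by exists `|k|%N => //=.
Qed.

Lemma JJ_ge0 : (0 <= JJ)%E.
Proof.
apply/ereal_infP => _ [k _ <-]; rewrite /ls_int.
by apply: integral_ge0 => x _; rewrite lee_fin phi_ge0.
Qed.


Lemma fine_le_of (x : \bar R) (y : R) : (0 <= x)%E -> (x <= y%:E)%E -> fine x <= y.
Proof. by case: x => //= r; rewrite lee_fin. Qed.

Lemma JJ_fin : JJ = (fine JJ)%:E.
Proof.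
have H := JJ_le_G n%:Z (ler_norm _).
have := JJ_ge0; move: H; case: JJ => //.
Qed.

Lemma Jr_pos : JJ != 0%E -> 0 < fine JJ.
Proof.
move=> J0; rewrite lt_def; apply/andP; split.
  by apply/eqP => h; move: J0; rewrite JJ_fin h eqxx.
by apply: fine_ge0; exact: JJ_ge0.
Qed.

Lemma KB k : fine JJ * (if (n%:Z <= `|k|)%R then Ak k else 0) <= Ak k * G k.
Proof.
case: ifP => nk; last by rewrite mulr0 mulr_ge0 ?Ak_ge0 ?G_ge0.
rewrite mulrC ler_wpM2l ?Ak_ge0 //; apply: fine_le_of; [exact: JJ_ge0 | exact: JJ_le_G].
Qed.

Lemma uD u : D u -> `|u / n%:R| <= tau / n%:R.
Proof.
rewrite /= in_itv /= => /andP[u0 ut].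
have n0' : 0 < n%:R :> R by rewrite ltr0n.
by rewrite ger0_norm ?divr_ge0 // ler_pM2r // invr_gt0.
Qed.

Lemma mD' : measurable D.
Proof. exact: mD. Qed.

Lemma orl_main (w : R) : 0 <= w -> JJ != 0%E ->
  (forall h, `|h| <= tau / n%:R -> (orl_norm M (diff_coef alpha h f) <= w%:E)%E) ->
  (orl_norm M (fun k => (fcoef f k - trunc k)%R) <= (VV / fine JJ * w)%:E)%E.
Proof.
move=> w0 J0 Hw.
have Jr0 := Jr_pos J0.
apply: ge_ereal_sup => _ [lam [lpos lsum] <-].
apply: esum_le_real => X fX.
set s := finmap.enum_fset _.
rewrite lee_fin.
under eq_bigr do rewrite tail_norm.
have H1 : fine JJ * (\sum_(k <- s) lam k * (if (n%:Z <= `|k|)%R then Ak k else 0))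
   <= \sum_(k <- s) (lam k * Ak k) * G k.
  rewrite mulr_sumr; apply: ler_sum => k _.
  by rewrite mulrCA -mulrA ler_wpM2l ?(ltW (lpos k)) // KB.
have H2 : \sum_(k <- s) (lam k * Ak k) * G k =
   \int[mu]_(u in D) (\sum_(k <- s) (lam k * Ak k) * phi alpha (ck k * u)).
  by rewrite (Rint_lin _ _ _ mufin (ltW al0)).
have H3 : \int[mu]_(u in D) (\sum_(k <- s) (lam k * Ak k) * phi alpha (ck k * u))
    <= \int[mu]_(u in D) w.
  apply: le_Rintegral; first exact: mD'.
  - exact: (integ_lin _ _ _ mufin (ltW al0)).
  - apply: (integ_bnd _ _ _ w) mufin _ _; first exact: measurable_cst.
    by move=> x; rewrite ger0_norm.
  - move=> u Du.
    rewrite -lee_fin.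
    apply: (le_trans _ (Hw _ (uD _ Du))).
    apply: (le_trans _ (ereal_sup_ubound _)); last by exists lam.
    apply: (le_trans _ (esum_ge_real _ _ fX)).
    rewrite lee_fin le_eqVlt; apply/orP; left; apply/eqP.
    by apply: eq_bigr => k _; rewrite bphi mulrAC -mulrA.
rewrite Rintegral_cst in H3; last exact: mD'.
have H4 : w * mu0 <= w * VV by rewrite ler_wpM2l // mu0_le.
rewrite mulrAC ler_pdivlMr //.
rewrite -/mu0 in H3; rewrite H2 in H1.
by rewrite mulrC (mulrC VV); exact: le_trans H1 (le_trans H3 H4).
Qed.


Lemma normc_ge0' (z : R[i]) : 0 <= Normc.normc z.
Proof. by case: z => x y; exact: sqrtr_ge0. Qed.

Lemma div_le_div (b x y : R) : 0 <= b -> 0 < x -> x <= y -> b / y <= b / x.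
Proof.
move=> b0 x0 xy; rewrite ler_wpM2l // lef_pV2 ?posrE //; exact: lt_le_trans xy.
Qed.

Lemma mu0_pos : JJ != 0%E -> 0 < mu0.
Proof.
move=> J0; have Jr0 := Jr_pos J0.
have H : fine JJ <= G n%:Z.
  by apply: fine_le_of; [exact: JJ_ge0 | exact: JJ_le_G (ler_norm _)].
have := le_trans H (G_le n%:Z).
have p0 : 0 < 2 `^ alpha :> R by apply: powR_gt0.
move=> H2; rewrite lt_def mu0_ge0 andbT; apply/eqP => m0.
by move: H2; rewrite m0 mulr0 => H3; have := lt_le_trans Jr0 H3; rewrite ltxx.
Qed.

Lemma lux_main (w : R) : 0 <= w -> JJ != 0%E ->
  (forall h, `|h| <= tau / n%:R -> (lux_norm M (diff_coef alpha h f) <= w%:E)%E) ->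
  (lux_norm M (fun k => (fcoef f k - trunc k)%R) <= (VV / fine JJ * w)%:E)%E.
Proof.
move=> w0 J0 Hw.
have Jr0 := Jr_pos J0.
have m0 := mu0_pos J0.
have V0 : 0 < VV by apply: lt_le_trans m0 mu0_le.
set Jr := fine JJ in Jr0 *.
set K := VV / Jr.
have K0 : 0 < K by rewrite divr_gt0.
apply/lee_addgt0Pr => e e0.
set a := w + e / K.
have a0 : 0 < a by rewrite /a ltr_wpDl // divr_gt0.
have wa : w < a by rewrite /a ltrDl divr_gt0.
have Ka : K * a = K * w + e by rewrite /a mulrDr mulrCA divff ?mulr1 // gt_eqF.
rewrite -EFinD -Ka; apply: ereal_inf_lbound; exists (K * a) => //; split.
  by rewrite mulr_gt0.
have P : forall u, D u ->
    (\esum_(k in [set: int]) (M k (Normc.normc (diff_coef alpha (u / n%:R) f k) / a))%:E <= 1)%E.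
  move=> u Du.
  have lt : (lux_norm M (diff_coef alpha (u / n%:R) f) < a%:E)%E.
    by apply: le_lt_trans (Hw _ (uD _ Du)) _; rewrite lte_fin.
  case: (ereal_inf_lt lt) => _ [a' [a'0 Ha'] <-]; rewrite lte_fin => a'a.
  apply: le_trans Ha'; apply: le_esum => k _; rewrite lee_fin.
  have [_ Mnd _ _] := HM k.
  apply: Mnd; first by rewrite divr_ge0 // ?normc_ge0' // ltW.
  by apply: div_le_div => //; [exact: normc_ge0' | exact: ltW].
apply: esum_le_real => X fX.
set s := finmap.enum_fset _.
rewrite lee_fin.
pose m k := Ak k * G k / (a * mu0).
have m_ge0 : forall k, 0 <= m k.
  by move=> k; rewrite /m divr_ge0 ?mulr_ge0 ?Ak_ge0 ?G_ge0 // ltW // mulr_gt0.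
have sgE : forall k, exists s0 : R, 0 <= s0 /\
    (forall x, 0 <= x -> M k (m k) + s0 * (x - m k) <= M k x).
  by move=> k; have [s0 H1 H2] := subgrad _ _ (HM k) (m_ge0 k); exists s0.
have [sg sgH] := boolp.choice sgE.
have sg0 k : 0 <= sg k by have [] := sgH k.
have sgP k x : 0 <= x -> M k (m k) + sg k * (x - m k) <= M k x.
  by have [_] := sgH k; apply.
have A : \sum_(k <- s) M k (Normc.normc (fcoef f k - trunc k) / (K * a)) <= \sum_(k <- s) M k (m k).
  apply: ler_sum => k _.
  have [_ Mnd _ _] := HM k.
  apply: Mnd.
    by apply: divr_ge0; [exact: normc_ge0' | exact: ltW (mulr_gt0 K0 a0)].
  rewrite tail_norm.
  have -> : (if (n%:Z <= `|k|)%R then Ak k else 0) / (K * a) =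
            (Jr * (if (n%:Z <= `|k|)%R then Ak k else 0)) / (VV * a).
    by rewrite /K; field; rewrite ?gt_eqF.
  apply: le_trans (_ : Ak k * G k / (VV * a) <= _).
    by rewrite ler_pM2r ?invr_gt0 ?mulr_gt0 //; exact: KB.
  apply: div_le_div; first by rewrite mulr_ge0 ?Ak_ge0 ?G_ge0.
    by rewrite mulr_gt0.
  by rewrite mulrC ler_pM2r // mu0_le.
apply: le_trans A _.
set c0 := 1 - \sum_(k <- s) M k (m k) + \sum_(k <- s) sg k * m k.
have Pt : forall u, D u ->
  \sum_(k <- s) (sg k * Ak k / a) * phi alpha (ck k * u) <= c0.
  move=> u Du.
  have H1 : \sum_(k <- s) M k (Normc.normc (diff_coef alpha (u / n%:R) f k) / a) <= 1.
    rewrite -lee_fin; apply: le_trans (P u Du).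
    apply: esum_ge_real => //.
  have H2 : \sum_(k <- s) (M k (m k) + sg k * (phi alpha (ck k * u) * Ak k / a - m k))
        <= \sum_(k <- s) M k (Normc.normc (diff_coef alpha (u / n%:R) f k) / a).
    apply: ler_sum => k _; rewrite bphi; apply: sgP.
    by rewrite divr_ge0 ?mulr_ge0 ?phi_ge0 ?Ak_ge0 // ltW.
  have E : \sum_(k <- s) (M k (m k) + sg k * (phi alpha (ck k * u) * Ak k / a - m k)) =
    \sum_(k <- s) M k (m k) + \sum_(k <- s) (sg k * Ak k / a) * phi alpha (ck k * u)
      - \sum_(k <- s) sg k * m k.
    rewrite -big_split -sumrB /=; apply: eq_bigr => k _; ring.
  rewrite /c0; move: (le_trans H2 H1); rewrite E; lra.
have I1 : \int[mu]_(u in D) (\sum_(k <- s) (sg k * Ak k / a) * phi alpha (ck k * u))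
    <= \int[mu]_(u in D) c0.
  apply: le_Rintegral; first exact: mD'.
  - exact: (integ_lin _ _ _ mufin (ltW al0)).
  - apply: (integ_bnd _ _ _ `|c0|) mufin _ _; first exact: measurable_cst.
    by move=> x.
  - exact: Pt.
rewrite (Rint_lin _ _ _ mufin (ltW al0)) Rintegral_cst in I1; last exact: mD'.
have E2 : \sum_(k <- s) sg k * Ak k / a * G k = mu0 * \sum_(k <- s) sg k * m k.
  rewrite mulr_sumr; apply: eq_bigr => k _; rewrite /m; field.
  by rewrite !gt_eqF.
rewrite E2 -/mu0 /c0 in I1.
have : 0 <= mu0 * (1 - \sum_(k <- s) M k (m k)) by nra.
by rewrite pmulr_rge0 // subr_ge0.
Qed.

End S8.

Section S9.
Context {R : realType}.
Variables (M : int -> R -> R) (f : R -> R[i]) (tau alpha : R) (n : nat).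
Hypotheses (HM : forall k, orlicz_fun (M k)) (tau0 : 0 < tau) (n0 : (0 < n)%N) (al0 : 0 < alpha).

Lemma exists_h (k : int) : (n%:Z <= `|k|)%R ->
  exists h : R, `|h| <= tau / n%:R /\ 0 < 2 `^ alpha * `|sin (k%:~R * h / 2)| `^ alpha.
Proof.
move=> nk.
have k1 : 1 <= `|k%:~R : R|.
  rewrite -intr_norm -natr_absz ler1n.
  by move: nk; rewrite -abszE lez_nat => nk; exact: leq_trans n0 nk.
have r0 : k%:~R != 0 :> R by rewrite -normr_gt0; apply: lt_le_trans k1.
set d := Num.min (tau / n%:R) 1.
have d0 : 0 < d by rewrite lt_min ltr01 andbT divr_gt0 // ltr0n.
have d1 : d <= 1 by rewrite ge_min lexx orbT.
exists (d / k%:~R); split.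
  rewrite normrM normfV ger0_norm; last exact: ltW.
  apply: le_trans (_ : d <= _); last by rewrite ge_min lexx.
  rewrite ler_pdivrMr; last by apply: lt_le_trans k1.
  by rewrite ler_peMr // ltW.
rewrite mulr_gt0 ?powR_gt0 //.
rewrite mulrCA divff // mulr1 ger0_norm; last by apply/ltW/sin2_gt0; lra.
by apply: sin2_gt0; lra.
Qed.

Lemma normc_diff h k : Normc.normc (diff_coef alpha h f k) =
   2 `^ alpha * `|sin (k%:~R * h / 2)| `^ alpha * Normc.normc (fcoef f k).
Proof.
by rewrite /diff_coef normc_real // mulr_ge0 ?powR_ge0 ?normc_ge0' // mulr_ge0 // powR_ge0.
Qed.

Lemma lux_zero (c : int -> R[i]) k : (lux_norm M c <= 0)%E -> Normc.normc (c k) = 0.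
Proof.
move=> H; apply/eqP; rewrite eq_le normc_ge0' andbT; rewrite leNgt; apply/negP => b0.
have [U U0 HU] := orlicz_to_infty _ (HM k).
set b := Normc.normc (c k) in b0.
have lt : (lux_norm M c < (b / U)%:E)%E by apply: le_lt_trans H _; rewrite lte_fin divr_gt0.
case: (ereal_inf_lt lt) => _ [a' [a'0 Ha'] <-]; rewrite lte_fin => a'a.
have : ((M k (b / a'))%:E <= 1)%E.
  apply: le_trans Ha'.
  apply: (esum_ge1 (fun j => M j (Normc.normc (c j) / a'))) => j.
  by apply: orlicz_ge0 => //; rewrite divr_ge0 ?normc_ge0' // ltW.
rewrite lee_fin leNgt => /negP; apply; apply: HU.
rewrite ler_pdivlMr //.
move: a'a; rewrite ltr_pdivlMr // => H1.
by rewrite mulrC ltW.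
Qed.

End S9.

Section S10.
Context {R : realType}.
Variables (M : int -> R -> R) (f : R -> R[i]) (tau alpha : R) (n : nat).
Hypotheses (HM : forall k, orlicz_fun (M k)) (tau0 : 0 < tau) (n0 : (0 < n)%N) (al0 : 0 < alpha).
Local Open Scope ereal_scope.

Lemma tail_zero nk :
  (forall h, (`|h| <= tau / n%:R)%R -> seqnorm nk M (diff_coef alpha h f) <= 0) ->
  seqnorm nk M (fun k => (fcoef f k - trunc f n k)%R) <= 0.
Proof.
move=> H; case: nk H => /= H.
- have A0 : forall k, (n%:Z <= `|k|)%R -> (Ak f k = 0)%R.
    move=> k nk; have [h [hb hp]] := exists_h tau alpha n tau0 n0 k nk.
    have := lux_zero M HM (diff_coef alpha h f) k (H h hb).
    by rewrite normc_diff => /eqP; rewrite mulf_eq0 (gt_eqF hp) /= => /eqP.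
  apply/lee_addgt0Pr => e e0; rewrite add0e; apply: ereal_inf_lbound; exists e => //; split => //.
  rewrite esum1 // => k _; rewrite tail_norm; case: ifP => nk.
    by rewrite A0 // mul0r; have [-> _ _ _] := HM k.
  by rewrite mul0r; have [-> _ _ _] := HM k.
- apply: ge_ereal_sup => _ [lam [lpos lsum] <-].
  have A0 : forall k, (n%:Z <= `|k|)%R -> (Ak f k = 0)%R.
    move=> k nk; have [h [hb hp]] := exists_h tau alpha n tau0 n0 k nk.
    have H1 : (lam k * Normc.normc (diff_coef alpha h f k))%:E <= 0.
      apply: le_trans (H h hb).
      apply: le_trans (ereal_sup_ubound _); last by exists lam.
      apply: (esum_ge1 (fun j => (lam j * Normc.normc (diff_coef alpha h f j))%R) k) => j.
      by rewrite mulr_ge0 ?normc_ge0' // ltW.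
    move: H1; rewrite lee_fin normc_diff => H1.
    apply/eqP; rewrite eq_le Ak_ge0 andbT.
    have lc : (0 < lam k * (2 `^ alpha * `|sin (k%:~R * h / 2)| `^ alpha))%R.
      by rewrite mulr_gt0.
    by rewrite mulrA pmulr_rle0 // in H1.
  rewrite esum1 // => k _; rewrite tail_norm; case: ifP => nk.
    by rewrite A0 // mulr0.
  by rewrite mulr0.
Qed.

Lemma sn_cases nk (c : int -> R[i]) :
  0 <= seqnorm nk M c \/ (forall d, seqnorm nk M d <= -oo).
Proof.
case: nk => /=.
  left; apply/ereal_infP => _ [a [a0 _] <-]; rewrite lee_fin; exact: ltW.
case: (pselect (exists lam : int -> R, (forall k, (0 < lam k)%R) /\
   \esum_(k in [set: int]) conj_fun (M k) (lam k) <= 1)) => [[lam Hl]|Hn].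
  left; apply: le_trans (ereal_sup_ubound _); last by exists lam.
  by apply: esum_ge0 => k _; rewrite lee_fin mulr_ge0 ?normc_ge0' // ltW; case: Hl.
right => d; apply: ge_ereal_sup => x [lam Hl _].
by exfalso; apply: Hn; exists lam.
Qed.

Lemma C_pos : 0 < Cconst alpha n tau.
Proof.
have p0 : (0 < 2 `^ alpha :> R)%R by apply: powR_gt0.
apply: (@lt_le_trans _ _ ((2 `^ alpha)^-1)%:E); first by rewrite lte_fin invr_gt0.
apply/ereal_infP => _ [v [F [Hv HF ->]]].
rewrite -/(JJ tau alpha n F).
case: ifP => J0; first exact: leey.
have J0' : JJ tau alpha n F != 0 by rewrite J0.
have Jr0 := Jr_pos tau alpha n tau0 al0 v F HF J0'.
have H : (fine (JJ tau alpha n F) <= 2 `^ alpha * VV tau v)%R.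
  have H1 : (fine (JJ tau alpha n F) <= G tau alpha n F n%:Z)%R.
    apply: fine_le_of; first exact: JJ_ge0.
    exact: (JJ_le_G tau alpha n tau0 al0 v F HF) (ler_norm _).
  apply: (le_trans H1); apply: (le_trans (G_le tau alpha n tau0 al0 v F HF _)).
  by rewrite ler_wpM2l ?powR_ge0 // (mu0_le tau tau0 v F HF).
by rewrite lee_fin -/(VV tau v) ler_pdivlMr // ler_pdivrMl.
Qed.

End S10.

Local Close Scope classical_set_scope.

Theorem corollary2 (R : realType) (M : int -> R -> R) (nk : normkind)
    (f : R -> R[i]) (tau alpha : R) (n : nat) :
  (forall k, orlicz_fun (M k)) ->
  in_SM M f ->
  0 < tau -> (0 < n)%N -> 0 < alpha ->
  (En nk M f n <= 2%:E * Cconst alpha n tau * omega nk M alpha f (tau / n%:R))%E.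
Proof.
move=> HM _ tau0 n0 al0.
have Ctr : trig_coefs n (trunc f n) by move=> k nk'; rewrite /trunc nk'.
have E_le : (En nk M f n <= seqnorm nk M (fun k => (fcoef f k - trunc f n k)%R))%E.
  by apply: ereal_inf_lbound; exists (trunc f n).
set T := seqnorm nk M _ in E_le.
set om := omega nk M alpha f (tau / n%:R).
have Hom : forall h, `|h| <= tau / n%:R -> (seqnorm nk M (diff_coef alpha h f) <= om)%E.
  by move=> h hb; apply: ereal_sup_ubound; exists h.
have tn0 : 0 <= tau / n%:R by rewrite divr_ge0 // ltW.
case: (sn_cases M nk (diff_coef alpha 0 f)) => [om0|Hninf]; last first.
  apply: le_trans E_le _; apply: le_trans (Hninf _) _; exact: leNye.
have om_ge0 : (0 <= om)%E by apply: le_trans om0 (Hom 0 _); rewrite normr0.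
have Cp : (0 < Cconst alpha n tau)%E by apply: C_pos.
move: Hom om_ge0; rewrite /om; case: (omega _ _ _ _ _) => [w| |] Hom om_ge0 //.
- rewrite lee_fin in om_ge0.
  have [w0|wpos] := eqVneq w 0.
    rewrite w0 mule0; apply: le_trans E_le _.
    by apply: (tail_zero M f tau alpha n HM tau0 n0) => h hb; move: (Hom h hb); rewrite w0.
  have w2 : 0 < 2 * w by rewrite mulr_gt0 // lt_def wpos.
  apply: le_trans E_le _.
  rewrite (muleC 2%:E) -muleA -EFinM -lee_pdivrMr //.
  apply/ereal_infP => _ [v [F [Hv HF ->]]].
  rewrite -/(JJ tau alpha n F).
  case: ifP => J0; first exact: leey.
  have J0' : JJ tau alpha n F != 0%E by rewrite J0.
  rewrite lee_pdivrMr //.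
  have Jr0 := Jr_pos tau alpha n tau0 al0 v F HF J0'.
  have V0 : 0 < VV tau v.
    apply: lt_le_trans (mu0_pos tau alpha n tau0 al0 v F HF J0') (mu0_le tau tau0 v F HF).
  have main : (T <= (VV tau v / fine (JJ tau alpha n F) * w)%:E)%E.
    have mg : forall nk', (forall h, `|h| <= tau / n%:R -> (seqnorm nk' M (diff_coef alpha h f) <= w%:E)%E) ->
       (seqnorm nk' M (fun k => (fcoef f k - trunc f n k)%R) <= (VV tau v / fine (JJ tau alpha n F) * w)%:E)%E.
      case => /= Hom'.
        exact: (lux_main M f tau alpha n HM tau0 n0 al0 v F HF w om_ge0 J0' Hom').
      exact: (orl_main M f tau alpha n tau0 n0 al0 v F HF w om_ge0 J0' Hom').
    exact: mg.
  apply: le_trans main _.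
  rewrite -EFinM lee_fin -/(VV tau v) ler_wpM2l ?divr_ge0 ?ltW //.
  have wp : 0 < w by rewrite lt_def wpos om_ge0.
  lra.
- rewrite gt0_muley; first exact: leey.
  by apply: mule_gt0 => //; rewrite lte_fin.
Qed.
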